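(* Let $s\ge1$ and $0\le k\le s$. Then (1) $O(s,k)=\binom{2s-k-1}{k}(C_{s-k})^2$, and (2) $O(s,k)=\sum_{m=k}^{s}\binom{m}{k}E(s,m)$.
   Context: A $p$-string of length $s$ is a correctly matched string of $s$ pairs of parentheses; there are $C_s=\frac{1}{s+1}\binom{2s}{s}$ of them ($C_0=1$). Given $p$-strings $U$ (upper), $W$ (lower) of length $s$, the meander graph $\Gamma^1_{2s-1}$ is obtained by marking points $0,1,\dots,2s$ on the $x$-axis, taking the segment $[0,2s]$, joining points $a,b$ by an upper semicircle for each matched pair of $U$ at positions $a<b$ (positions $1,\dots,2s$), and points $a-1,b-1$ by a lower semicircle for each matched pair of $W$ at positions $a<b$; the vertices are $1,\dots,2s-1$. A pierced circle at position $i$ ($1\le i\le 2s-2$) is present if vertices $i,i+1$ are joined both by an upper and a lower semicircle. $E(s,k)$ is the number of pairs $(U,W)$ whose meander graph has exactly $k$ pierced circles. For the path graph $P_v$ with vertices $1,\dots,v$, $\mathcal{A}_v(k)$ denotes the set of ways to place $k$ pierced circles at positions in $\{1,\dots,v-1\}$ with no two sharing a vertex (positions pairwise differing by at least $2$). $O(s,k)$ is the number of triples $(A,P,Q)$ with $A\in\mathcal{A}_{2s-1}(k)$ and $P,Q$ $p$-strings of length $s-k$. *)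

(* Defs.v *)
From mathcomp Require Import all_boot.
Set Implicit Arguments. Unset Strict Implicit. Unset Printing Implicit Defensive.

(* A word of parentheses is a seq bool: true = '(' , false = ')'. *)

Definition balanced (w : seq bool) : bool :=
  all (fun i => count negb (take i w) <= count id (take i w)) (iota 0 (size w).+1)
  && (count id w == count negb w).

(* Character at position a (positions are numbered 1..size w). *)
Definition chr (w : seq bool) (a : nat) : bool := nth false w a.-1.

Definition matched (w : seq bool) (a b : nat) : bool :=
  [&& 1 <= a, a < b, b <= size w, chr w a, ~~ chr w b &
      balanced (take (b - a - 1) (drop a w))].

Definition pstr (s : nat) : {set (s.*2).-tuple bool} :=
  [set t : (s.*2).-tuple bool | balanced t].

(* Number of pierced circles of the meander graph of (U, W), U, W p-strings
   of length s: positions i, 1 <= i <= 2s-2, such that vertices i, i+1 are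
   joined by an upper semicircle (U matches positions i, i+1) and by a lower
   semicircle (W matches positions i+1, i+2, drawn between points i, i+1). *)
Definition pierced (s : nat) (U W : seq bool) : nat :=
  count (fun i => matched U i i.+1 && matched W i.+1 i.+2)
        (iota 1 (s.*2 - 2)).

Definition E (s k : nat) : nat :=
  #|[set p : (s.*2).-tuple bool * (s.*2).-tuple bool |
      [&& p.1 \in pstr s, p.2 \in pstr s & pierced s p.1 p.2 == k]]|.

Definition Aset (v k : nat) : {set {set 'I_v}} :=
  [set A : {set 'I_v} |
     [&& [forall i in A, 1 <= (i : nat)],
         [forall i in A, forall j in A, ((i : nat) < j) ==> (i.+2 <= j)] &
         #|A| == k]].

Definition O (s k : nat) : nat :=
  #|[set x : {set 'I_(s.*2 - 1)} * ((s - k).*2.-tuple bool * (s - k).*2.-tuple bool) |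
      [&& x.1 \in Aset (s.*2 - 1) k, x.2.1 \in pstr (s - k) & x.2.2 \in pstr (s - k)]]|.

Definition catalan (n : nat) : nat := 'C(n.*2, n) %/ n.+1.

(* Main.v *)
Require Import Defs.
From mathcomp Require Import all_boot zify.
Set Implicit Arguments. Unset Strict Implicit. Unset Printing Implicit Defensive.

Fixpoint allw (n : nat) : seq (seq bool) :=
  if n is n'.+1 then [seq true :: w | w <- allw n'] ++ [seq false :: w | w <- allw n']
  else [:: [::]].

Lemma consb_inj (b : bool) : injective (cons b).
Proof. by move=> x y [].
Qed.

Lemma allwP n w : (w \in allw n) = (size w == n).
Proof.
elim: n w => [|n IH] w; first by case: w.
case: w => [|b w] /=.
  by rewrite mem_cat; apply/negP => /orP [] /mapP [].
rewrite mem_cat; case: b.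
- rewrite (mem_map (@consb_inj true)) IH.
  have -> : (true :: w \in [seq false :: w0 | w0 <- allw n]) = false.
    by apply/mapP => -[].
  by rewrite orbF.
- rewrite (mem_map (@consb_inj false)) IH.
  have -> : (false :: w \in [seq true :: w0 | w0 <- allw n]) = false.
    by apply/mapP => -[].
  by [].
Qed.

Lemma uniq_allw n : uniq (allw n).
Proof.
elim: n => [|n IH] //=.
rewrite cat_uniq !map_inj_uniq ?IH //=; try exact: consb_inj.
rewrite andbT; apply/hasPn => w /mapP [x _ ->]; by apply/negP => /mapP [y _] [].
Qed.

Lemma count_allwS n (P : pred (seq bool)) :
  count P (allw n.+1) = count (fun w => P (true :: w)) (allw n)
                        + count (fun w => P (false :: w)) (allw n).
Proof. by rewrite /= count_cat !count_map. Qed.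

Lemma card_tup m (P : pred (seq bool)) :
  #|[set t : m.-tuple bool | P t]| = count P (allw m).
Proof.
rewrite cardsE cardE /enum_mem size_filter -enumT.
rewrite -(count_map val P).
apply/permP; apply: uniq_perm.
- rewrite map_inj_uniq; [exact: enum_uniq | exact: val_inj].
- exact: uniq_allw.
move=> w; rewrite allwP; apply/mapP/idP => [[t _ ->]|/eqP hw].
  by rewrite size_tuple.
by exists (Tuple (introT eqP hw)) => //; rewrite mem_enum.
Qed.


Fixpoint okh (h : nat) (w : seq bool) : bool :=
  match w with
  | [::] => true
  | b :: w' => if b then okh h.+1 w' else (0 < h) && okh h.-1 w'
  end.

Lemma okhE h w :
  all (fun i => count negb (take i w) <= h + count id (take i w)) (iota 0 (size w).+1)
  = okh h w.
Proof.
elim: w h => [|b w IH] h; first by [].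
have -> : iota 0 (size (b :: w)).+1 = 0 :: map (addn 1) (iota 0 (size w).+1).
  by rewrite -iotaDl.
case: b.
  rewrite [okh _ _]/= -IH; move: (iota 0 (size w).+1) => L.
  rewrite [all _ (_ :: _)]/= all_map.
  apply: eq_all => i; rewrite /= add1n /=; rewrite !add0n; apply/idP/idP; lia.
case: h => [|h].
  by case: w IH.
rewrite [okh _ _]/= -IH; move: (iota 0 (size w).+1) => L.
rewrite [all _ (_ :: _)]/= all_map.
by apply: eq_all => i; rewrite /= add1n /= !add0n; apply/idP/idP; lia.
Qed.

Definition bal (w : seq bool) := okh 0 w && (count id w == count negb w).

Lemma balancedE w : balanced w = bal w.
Proof. by rewrite /balanced /bal -okhE. Qed.

Definition ins (t : nat) (w : seq bool) := take t w ++ true :: false :: drop t w.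

Lemma okh_ins t h w : okh h (ins t w) = okh h w.
Proof.
rewrite /ins; elim: t w h => [|t IH] w h.
  by rewrite take0 drop0 /=.
case: w => [|b w] /=.
  by [].
by case: b => /=; rewrite IH.
Qed.

Lemma count_ins t w (P : pred bool) : count P (ins t w) = count P w + P true + P false.
Proof.
by rewrite /ins count_cat /= -{3}(cat_take_drop t w) count_cat; lia.
Qed.

Lemma size_ins t w : size (ins t w) = (size w).+2.
Proof. by rewrite /ins size_cat /= -{3}(cat_take_drop t w) size_cat; lia. Qed.

Lemma bal_ins t w : bal (ins t w) = bal w.
Proof.
rewrite /bal okh_ins !count_ins /=; congr (_ && _); apply/eqP/eqP; lia.
Qed.


Definition Q m h u := count (fun w => okh h w && (count id w == u)) (allw m).
Definition bm n u := if u is u'.+1 then 'C(n, u') else 0.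

Lemma Q_S m h u : Q m.+1 h u =
  (if u is u'.+1 then Q m h.+1 u' else 0) + (if h is h'.+1 then Q m h' u else 0).
Proof.
rewrite /Q count_allwS; congr (_ + _).
  case: u => [|u].
    by rewrite (@eq_count _ _ pred0) ?count_pred0 // => w /=; rewrite andbF.
  by apply: eq_count => w /=.
case: h => [|h].
  by rewrite (@eq_count _ _ pred0) ?count_pred0.
by apply: eq_count => w /=.
Qed.

Lemma bm_pascal n u : 'C(n.+1, u) = 'C(n, u) + bm n u.
Proof. by case: u => [|u] //=; rewrite !bin0. Qed.

Lemma Qform u : forall h m, m = u.*2 + h -> Q m h u + bm m u = 'C(m, u).
Proof.
elim: u => [|u IHu].
  elim => [|h IHh] m ->; first by [].
  rewrite (_ : 0.*2 + h.+1 = (0.*2 + h).+1) // Q_S.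
  by move: (IHh _ erefl); rewrite /= !bin0 !addn0 => ->.
elim => [|h IHh] m ->.
  rewrite (_ : (u.+1).*2 + 0 = (u.*2 + 1).+1); last by lia.
  rewrite Q_S addn0.
  have H1 := IHu 1 (u.*2 + 1) erefl.
  have P1 := binS (u.*2 + 1) u.
  have P2 := bm_pascal (u.*2 + 1) u.
  have S : 'C(u.*2 + 1, u.+1) = 'C(u.*2 + 1, u).
    rewrite -bin_sub; last by lia.
    by rewrite (_ : u.*2 + 1 - u.+1 = u) //; lia.
  rewrite /=; lia.
rewrite (_ : (u.+1).*2 + h.+1 = (u.*2 + h.+2).+1); last by lia.
rewrite Q_S.
have H1 := IHu h.+2 (u.*2 + h.+2) erefl.
have H2 := IHh (u.*2 + h.+2) ltac:(lia).
have P1 := binS (u.*2 + h.+2) u.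
have P2 := bm_pascal (u.*2 + h.+2) u.
move: H2; rewrite /= => H2; lia.
Qed.

Lemma count_bal n : count bal (allw n.*2) = catalan n.
Proof.
have -> : count bal (allw n.*2) = Q n.*2 0 n.
  apply: eq_in_count => w; rewrite allwP => /eqP hw.
  rewrite /bal; congr (_ && _).
  have := count_predC id w; rewrite hw (@eq_count _ (predC id) negb) // => h.
  apply/eqP/eqP; lia.
have := @Qform n 0 (n.*2) (esym (addn0 _)).
rewrite /catalan; case: n => [|n] /=; first by rewrite /Q /= => _.
have := mul_bin_left (n.+1).*2 n.
rewrite (_ : (n.+1).*2 - n = n.+2); last by lia.
move=> H1 H2.
have -> : 'C((n.+1).*2, n.+1) = n.+2 * Q (n.+1).*2 0 n.+1 by nia.
by rewrite mulKn.
Qed.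


Fixpoint na (w : seq bool) : bool :=
  if w is b :: w' then na w' && ~~ (b && head false w') else true.

Definition cna n k := count (fun w => na w && (count id w == k)) (allw n).
Definition dna n k := count (fun w => ~~ head false w && na w && (count id w == k)) (allw n).

Lemma dna_S n k : dna n.+1 k = cna n k.
Proof.
rewrite /dna /cna count_allwS.
rewrite (@eq_count _ _ pred0) ?count_pred0 //.
by apply: eq_count => w /=; rewrite andbT.
Qed.

Lemma cna_S n k : cna n.+1 k = (if k is k'.+1 then dna n k' else 0) + cna n k.
Proof.
rewrite /dna /cna count_allwS; congr (_ + _).
  case: k => [|k].
    by rewrite (@eq_count _ _ pred0) ?count_pred0 // => w /=; rewrite andbF.
  by apply: eq_count => w /=; case: (na w); case: (head false w).
by apply: eq_count => w /=; rewrite andbT.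
Qed.

Lemma cna_form n : forall k, cna n k = 'C(n.+1 - k, k) /\ cna n.+1 k = 'C(n.+2 - k, k).
Proof.
elim: n => [|n IH] k.
  by split; case: k => [|[|k]].
split; first by case: (IH k).
rewrite cna_S; case: k => [|k].
  by rewrite add0n (proj2 (IH 0)) !bin0.
case: (IH k) => [H1 _]; case: (IH k.+1) => [_ H2].
rewrite dna_S H1 H2.
have [hk|hk] := leqP k n.+1.
  rewrite (_ : n.+3 - k.+1 = (n.+1 - k).+1); last by lia.
  rewrite (_ : n.+2 - k.+1 = n.+1 - k); last by lia.
  by rewrite binS addnC.
rewrite !bin_small //; lia.
Qed.

Lemma naP w : reflect (forall i, ~~ (nth false w i && nth false w i.+1)) (na w).
Proof.
elim: w => [|b w IH] /=; first by constructor => i; rewrite nth_nil.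
apply: (iffP andP) => [[h1 h2] [|i]|h].
- by case: w {IH h1} h2.
- by move/IH: h1; apply.
split; first by apply/IH => i; exact: (h i.+1).
by have := h 0; case: w {IH h}.
Qed.


Section AsetSec.
Variable v : nat.

Definition Fs (A : {set 'I_v}) : v.-tuple bool := [tuple (i \in A) | i < v].

Lemma nthF A (i : 'I_v) : nth false (Fs A) i = (i \in A).
Proof. by rewrite -tnth_nth tnth_mktuple. Qed.

Lemma nthF_ge A n : v <= n -> nth false (Fs A) n = false.
Proof. by move=> h; rewrite nth_default // size_tuple. Qed.

Lemma countF A : count id (Fs A) = #|A|.
Proof.
by rewrite cardE /enum_mem size_filter -enumT /= count_map.
Qed.

Lemma AsetF k A : (A \in Aset v k) = [&& ~~ head false (Fs A), na (Fs A) & count id (Fs A) == k].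
Proof.
rewrite inE countF; congr [&& _, _ & _].
  rewrite -nth0; have [v0|vpos] := posnP v.
    by rewrite nthF_ge ?v0 //; apply/forallP => -[i hi]; exfalso; move: hi; rewrite v0.
  rewrite (nthF A (Ordinal vpos)); apply/forallP/idP => [h|h i].
    by apply/negP => h0; have := h (Ordinal vpos); rewrite h0.
  apply/implyP => hi; rewrite lt0n; apply/negP => /eqP e.
  have : i = Ordinal vpos by apply: val_inj.
  by move=> ei; move: hi; rewrite ei (negbTE h).
apply/forallP/naP => [h n|h i].
  have [hn|hn] := ltnP n.+1 v; last by rewrite (nthF_ge A hn) andbF.
  rewrite (nthF A (Ordinal (ltnW hn))) (nthF A (Ordinal hn)).
  apply/negP => /andP [hi hj].
  have := h (Ordinal (ltnW hn)); rewrite hi /= => /forallP /(_ (Ordinal hn)).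
  by rewrite hj /= ltnSn /= ltnn.
apply/implyP => hi; apply/forallP => j; apply/implyP => hj; apply/implyP => hij.
rewrite ltnNge; apply/negP => hji.
have ej : (j : nat) = i.+1 by lia.
have := h i; rewrite (nthF A i) hi /=.
by rewrite -ej (nthF A j) hj.
Qed.

Lemma Fs_inj : injective Fs.
Proof.
move=> A B e; apply/finset.setP => i.
by rewrite -(tnth_mktuple (fun i => i \in A)) -(tnth_mktuple (fun i => i \in B)) -/(Fs A) e.
Qed.

Lemma card_Aset_cnt k :
  #|Aset v k| = dna v k.
Proof.
rewrite /dna -card_tup -(card_imset _ Fs_inj); apply: eq_card => t.
rewrite inE; apply/imsetP/idP => [[A hA ->]|ht].
  by rewrite -andbA -AsetF.
have et : t = Fs [set i | tnth t i].
  by apply: eq_from_tnth => i; rewrite tnth_mktuple inE.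
by exists [set i | tnth t i]; rewrite // AsetF -et andbA.
Qed.
End AsetSec.

Lemma card_Aset v k : #|Aset v.+1 k| = 'C(v.+1 - k, k).
Proof. by rewrite card_Aset_cnt dna_S (proj1 (cna_form _ _)). Qed.


Definition pat (i : nat) (w : seq bool) := nth false w i.-1 && ~~ nth false w i.
Definition del (t : nat) (w : seq bool) := take t w ++ drop t.+2 w.

Lemma del_ins t w : t <= size w -> del t (ins t w) = w.
Proof.
move=> ht; rewrite /del /ins.
have st : size (take t w) = t by rewrite size_takel; lia.
rewrite -{1}st take_size_cat // drop_cat st ifN; last by lia.
rewrite (_ : t.+2 - t = 2); last by lia.
by rewrite /= drop0 cat_take_drop.
Qed.

Lemma ins_del t w : t.+2 <= size w -> pat t.+1 w -> ins t (del t w) = w.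
Proof.
move=> ht /andP [h1 h2]; rewrite /del /ins.
have st : size (take t w) = t by rewrite size_takel; lia.
rewrite -{1}st take_size_cat // drop_cat st ltnn subnn drop0.
rewrite -{3}(cat_take_drop t w); congr (_ ++ _).
have -> : drop t w = nth false w t :: nth false w t.+1 :: drop t.+2 w.
  rewrite (drop_nth false (n := t)); last by lia.
  by rewrite (drop_nth false (n := t.+1)) //; lia.
by rewrite /= in h1; rewrite h1 (negbTE h2).
Qed.

Lemma size_del t w : t.+2 <= size w -> size (del t w) = size w - 2.
Proof. move=> h0; rewrite /del size_cat size_take size_drop; case: (ltnP t (size w)) => h; lia. Qed.

Lemma ins_count m t (P : pred (seq bool)) : t <= m ->
  count (fun w => pat t.+1 w && P w) (allw m.+2) = count (fun w => P (ins t w)) (allw m).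
Proof.
move=> htm.
rewrite -(count_map (ins t) P) (@eq_count _ _ (predI P (pat t.+1))); last first.
  by move=> w /=; rewrite andbC.
rewrite -count_filter; apply/permP; apply: uniq_perm.
- by rewrite filter_uniq // uniq_allw.
- rewrite map_inj_in_uniq ?uniq_allw // => x y; rewrite !allwP => /eqP hx /eqP hy e.
  by rewrite -(del_ins (t := t) (w := x)) ?hx // e del_ins ?hy.
move=> w; rewrite mem_filter allwP; apply/andP/mapP => [[hp /eqP hs]|[x hx ->]].
  exists (del t w); first by rewrite allwP size_del hs; lia.
  by rewrite ins_del // hs; lia.
move: hx; rewrite allwP => /eqP hx; split; last by rewrite size_ins hx.
rewrite /pat /ins /= nth_cat size_takel ?hx //.
by rewrite ltnn subnn /= nth_cat size_takel ?hx // ltnNge leqnSn subSnn.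
Qed.

Lemma nth_ins t w j : t <= size w -> j < t -> nth false (ins t w) j = nth false w j.
Proof.
move=> h hj; rewrite /ins nth_cat size_takel //.
by rewrite hj nth_take.
Qed.

Lemma core : forall T s, sorted (fun a b => b.+2 <= a) T ->
  all (fun i => (0 < i) && (i < s.*2)) T ->
  count (fun w => bal w && all (pat^~ w) T) (allw s.*2) = catalan (s - size T).
Proof.
elim => [|t T IH] s hsort hall.
  by rewrite subn0 -count_bal; apply: eq_count => w; rewrite andbT.
move: hall => /= /andP [/andP [t0 ts] hall].
case: s ts hall => [|s] ts hall; first by lia.
case: t t0 ts hsort => [|t] t0 ts hsort; first by lia.
have hT : all (fun i => i.+2 <= t.+1) T.
  by apply: (order_path_min _ hsort) => a b c; lia.
rewrite (_ : (s.+1).*2 = (s.*2).+2); last by lia.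
rewrite (@eq_count _ _ (fun w => pat t.+1 w && (bal w && all (pat^~ w) T))); last first.
  by move=> w /=; rewrite andbCA.
rewrite ins_count; last by lia.
rewrite subSS -IH; last first.
- apply/allP => i hi; move/allP: hT => /(_ i hi); move/allP: hall => /(_ i hi); lia.
- exact: path_sorted hsort.
apply: eq_in_count => w; rewrite allwP => /eqP hw.
rewrite bal_ins; congr (_ && _).
apply: eq_in_all => i hi; move/allP: hT => /(_ i hi) hiT; move/allP: hall => /(_ i hi) hia.
rewrite /pat !nth_ins ?hw //. lia.
Qed.


Lemma matched1 w i : matched w i i.+1 = [&& 0 < i, i < size w & pat i w].
Proof.
rewrite /matched subSnn subnn take0 ltnSn /= andbT /pat /chr /=.
by case: (0 < i).
Qed.

Lemma cardE_sum (T : finType) (P : pred T) : #|[set x | P x]| = \sum_(x : T) (P x : nat).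
Proof.
rewrite -sum1_card big_mkcond /=; apply: eq_bigr => x _; rewrite inE.
by case: (P x).
Qed.

Lemma card_ord_pred v (f : pred nat) : #|[set i : 'I_v | f i]| = count f (iota 0 v).
Proof.
rewrite cardsE cardE /enum_mem size_filter -enumT -val_enum_ord count_map.
by [].
Qed.

Lemma sel_sum b x (f : nat -> nat) :
  \sum_(0 <= m < b) f m * (x == m) = (x < b) * f x.
Proof.
elim: b => [|b IH]; first by rewrite big_geq.
rewrite big_nat_recr //= IH.
case: (ltngtP x b) => h.
- by rewrite (_ : x < b.+1) //; lia.
- have -> : (x < b.+1) = false by apply/negP; lia.
  by rewrite /nat_of_bool mul0n muln0.
- by rewrite h ltnSn /nat_of_bool mul0n muln1 mul1n.
Qed.

Lemma pierced_bound s U W : size U = s.*2 -> balanced U -> pierced s U W < s.+1.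
Proof.
move=> hs; rewrite balancedE /bal => /andP [_ /eqP hc].
have ht : count id U = s.
  have := count_predC id U; rewrite hs (@eq_count _ (predC id) negb) //; lia.
rewrite ltnS -{2}ht /pierced.
apply: (@leq_trans (count (fun i => nth false U i.-1) (iota 1 (s.*2 - 2)))).
  apply: sub_count => i /= /andP [h _]; move: h; rewrite matched1 /pat.
  by case/and3P => _ _ /andP [].
rewrite (iotaDl 1 0) count_map.
apply: (@leq_trans (count (nth false U) (iota 0 (size U)))).
  rewrite (_ : size U = (s.*2 - 2) + (size U - (s.*2 - 2))); last by lia.
  by rewrite iotaD count_cat leq_addr.
by rewrite -(count_map (nth false U) id) map_nth_iota0 // take_size.
Qed.


Lemma card_pstr n : #|pstr n| = catalan n.
Proof.
rewrite /pstr (card_tup (n.*2) balanced) -count_bal.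
by apply: eq_count => w; rewrite balancedE.
Qed.

Lemma O_prod s k : O s k = #|Aset (s.*2 - 1) k| * (#|pstr (s - k)| * #|pstr (s - k)|).
Proof.
rewrite /O -!cardsX; apply: eq_card => -[A [P Q]].
by rewrite !inE.
Qed.

Lemma part1 s k : 1 <= s -> O s k = 'C(s.*2 - k - 1, k) * (catalan (s - k)) ^ 2.
Proof.
move=> hs; rewrite O_prod card_pstr mulnn.
rewrite (_ : s.*2 - 1 = (s.*2 - 2).+1); last by lia.
rewrite card_Aset; congr ('C(_, _) * _); lia.
Qed.

Lemma forall_all n (S : {set 'I_n}) (f : pred nat) :
  [forall i in S, f i] = all f (rev (map (@nat_of_ord n) (enum S))).
Proof.
rewrite all_rev all_map; apply/forall_inP/allP => [h i|h i hi].
  by rewrite mem_enum => /h.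
by apply: h; rewrite mem_enum.
Qed.

Lemma sorted_enum n (S : {set 'I_n}) : sorted ltn (map (@nat_of_ord n) (enum S)).
Proof.
rewrite -[enum _](eq_filter (mem_enum _)).
rewrite -(eq_filter (mem_map val_inj _)) -filter_map.
by rewrite (sorted_filter ltn_trans) // unlock val_ord_enum iota_ltn_sorted.
Qed.

Section Main.
Variables (s k : nat).
Hypothesis hs : 1 <= s.
Local Notation v := (s.*2 - 1).

Lemma Aset_of (S : {set 'I_v}) (w : seq bool) :
  #|S| == k -> [forall i in S, (0 < i) && matched w i i.+1] -> S \in Aset v k.
Proof.
move=> hk h; rewrite inE; apply/and3P; split => //.
  by apply/forall_inP => i hi; move/forall_inP: h => /(_ i hi) /andP [].
apply/forall_inP => i hi; apply/forall_inP => j hj; apply/implyP => hij.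
move/forall_inP: h => h; have hi' := h i hi; have hj' := h j hj.
rewrite leqNgt; apply/negP => hji.
have ej : (j : nat) = i.+1 by lia.
move/andP: hi' => [_]; rewrite matched1 => /and3P [_ _ /andP [_ hn]].
move/andP: hj' => [_]; rewrite matched1 => /and3P [_ _ /andP [hp _]].
by move: hp; rewrite ej /= (negbTE hn).
Qed.

Definition TS (S : {set 'I_v}) := rev (map (@nat_of_ord v) (enum S)).

Lemma TS_props (S : {set 'I_v}) : S \in Aset v k ->
  [/\ sorted (fun a b => b.+2 <= a) (TS S), all (fun i => (0 < i) && (i < s.*2 - 1)) (TS S)
    & size (TS S) = k].
Proof.
rewrite inE => /and3P [h1 h2 /eqP h3]; split.
- rewrite /TS rev_sorted.
  apply: (@sub_in_sorted _ (mem (map (@nat_of_ord v) (enum S))) ltn); last first.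
  + exact: sorted_enum.
  + by apply/allP.
  move=> x y /mapP [i hi ->] /mapP [j hj ->] /= hij.
  rewrite mem_enum in hi; rewrite mem_enum in hj.
  by move/forall_inP: h2 => /(_ i hi) /forall_inP /(_ j hj) /implyP /(_ hij).
- rewrite -forall_all; apply/forall_inP => i hi.
  by move/forall_inP: h1 => /(_ i hi) ->; rewrite ltn_ord.
- by rewrite /TS size_rev size_map -cardE.
Qed.

Lemma countU (S : {set 'I_v}) : S \in Aset v k ->
  #|[set U : (s.*2).-tuple bool | (U \in pstr s) && [forall i in S, (0 < i) && matched U i i.+1]]|
  = catalan (s - k).
Proof.
move=> hS; case: (TS_props hS) => hsort hall hsize.
rewrite (_ : #|_| = count (fun w => balanced w && [forall i in S, (0 < i) && matched w i i.+1]) (allw s.*2)); last first.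
  by rewrite -card_tup; apply: eq_card => U; rewrite !inE.
rewrite -hsize -core //; last first.
  by apply/allP => i /(allP hall) /andP [-> /= h]; lia.
apply: eq_in_count => w; rewrite allwP => /eqP hw.
rewrite balancedE (forall_all S (fun i => (0 < i) && matched w i i.+1)) -/(TS S); congr (_ && _).
apply: eq_in_all => i /(allP hall) /andP [h0 h1].
by rewrite matched1 h0 hw /=; rewrite (_ : i < s.*2) //; lia.
Qed.

Lemma countW (S : {set 'I_v}) : S \in Aset v k ->
  #|[set W : (s.*2).-tuple bool | (W \in pstr s) && [forall i in S, matched W i.+1 i.+2]]|
  = catalan (s - k).
Proof.
move=> hS; case: (TS_props hS) => hsort hall hsize.
rewrite (_ : #|_| = count (fun w => balanced w && [forall i in S, matched w i.+1 i.+2]) (allw s.*2)); last first.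
  by rewrite -card_tup; apply: eq_card => U; rewrite !inE.
rewrite -hsize -(size_map succn) -core //; last first.
- rewrite all_map; apply/allP => i /(allP hall) /andP [h0 h1] /=; lia.
- rewrite sorted_map; apply: sub_sorted hsort => a b /=; lia.
apply: eq_in_count => w; rewrite allwP => /eqP hw.
rewrite balancedE (forall_all S (fun i => matched w i.+1 i.+2)) -/(TS S); congr (_ && _).
rewrite all_map; apply: eq_in_all => i /(allP hall) /andP [h0 h1].
by rewrite /= matched1 hw /=; rewrite (_ : i.+1 < s.*2) //; lia.
Qed.
End Main.


Lemma part2 s k : 1 <= s -> k <= s -> O s k = \sum_(k <= m < s.+1) 'C(m, k) * E s m.
Proof.
move=> hs hk.
pose Dp (p : (s.*2).-tuple bool * (s.*2).-tuple bool) := (p.1 \in pstr s) && (p.2 \in pstr s).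
pose PS (p : (s.*2).-tuple bool * (s.*2).-tuple bool) : {set 'I_(s.*2 - 1)} :=
  [set i : 'I_(s.*2 - 1) | (0 < i) && matched p.1 i i.+1 && matched p.2 i.+1 i.+2].
have -> : \sum_(k <= m < s.+1) 'C(m, k) * E s m = \sum_(0 <= m < s.+1) 'C(m, k) * E s m.
  rewrite [in RHS](@big_cat_nat _ _ _ k) //=; last by lia.
  rewrite [X in _ = X + _]big_nat [X in _ = X + _]big1 ?add0n // => m /andP [_ hm].
  by rewrite bin_small.
have EA m : E s m = \sum_p (Dp p * (pierced s p.1 p.2 == m)).
  rewrite /E cardE_sum; apply: eq_bigr => p _; rewrite /Dp.
  by case: (p.1 \in pstr s); case: (p.2 \in pstr s); case: (pierced s p.1 p.2 == m).
under eq_bigr => m _ do rewrite EA big_distrr.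
rewrite exchange_big /=.
have step p : \sum_(0 <= m < s.+1) 'C(m, k) * (Dp p * (pierced s p.1 p.2 == m))
    = Dp p * 'C(pierced s p.1 p.2, k).
  case hD : (Dp p).
    under eq_bigr => m _ do rewrite mul1n.
    rewrite sel_sum mul1n.
    move: hD; rewrite /Dp !inE => /andP [h1 _].
    by rewrite pierced_bound ?size_tuple // mul1n.
  by rewrite big1 // => m _; rewrite mul0n muln0.
rewrite (eq_bigr _ (fun p _ => step p)).
have hPS p : #|PS p| = pierced s p.1 p.2.
  rewrite /PS (card_ord_pred (s.*2 - 1) (fun i => (0 < i) && matched p.1 i i.+1 && matched p.2 i.+1 i.+2)).
  rewrite (_ : s.*2 - 1 = (s.*2 - 2).+1); last by lia.
  rewrite /= /pierced; apply: eq_in_count => i; rewrite mem_iota => /andP [h _].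
  by rewrite h.
under eq_bigr => p _ do rewrite -hPS -cards_draws cardE_sum big_distrr.
rewrite exchange_big /=.
have stepS (S : {set 'I_(s.*2 - 1)}) : \sum_p Dp p * ((S \subset PS p) && (#|S| == k))
    = (S \in Aset (s.*2 - 1) k) * (catalan (s - k) * catalan (s - k)).
  case hk' : (#|S| == k); last first.
    rewrite big1 => [|p _]; last by rewrite andbF muln0.
    by rewrite inE hk' !andbF.
  have -> : \sum_p Dp p * ((S \subset PS p) && true) = #|[set p | Dp p && (S \subset PS p)]|.
    rewrite cardE_sum; apply: eq_bigr => p _; rewrite andbT.
    by case: (Dp p); case: (S \subset PS p).
  rewrite (_ : [set p | Dp p && (S \subset PS p)] =
     setX [set U : (s.*2).-tuple bool | (U \in pstr s) && [forall i in S, (0 < i) && matched U i i.+1]]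
          [set W : (s.*2).-tuple bool | (W \in pstr s) && [forall i in S, matched W i.+1 i.+2]]); last first.
    apply/setP => -[U W]; rewrite !inE /Dp /=.
    have -> : (S \subset PS (U, W)) = [forall i in S, (0 < i) && matched U i i.+1]
                                     && [forall i in S, matched W i.+1 i.+2].
      apply/subsetP/andP => [h|[h1 h2] i hi].
        split; apply/forall_inP => i hi; move: (h i hi); rewrite /PS inE /=; by case/andP.
      rewrite /PS inE /=; move/forall_inP: h1 => /(_ i hi) ->.
      by move/forall_inP: h2 => /(_ i hi) ->.
    rewrite !inE; by case: (balanced U); case: (balanced W); case: [forall i in S, (0 < i) && matched U i i.+1]; case: [forall i in S, matched W i.+1 i.+2].
  rewrite cardsX; case hA : (S \in Aset (s.*2 - 1) k).
    by rewrite (countU hs hA) (countW hs hA) mul1n.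
  rewrite (_ : #|[set U : (s.*2).-tuple bool | (U \in pstr s) && [forall i in S, (0 < i) && matched U i i.+1]]| = 0) ?mul0n //.
  apply: eq_card0 => U; rewrite !inE; apply/negP => /andP [_ h].
  by rewrite (Aset_of hs hk' h) in hA.
under eq_bigr => S _ do rewrite stepS.
rewrite -big_distrl /= O_prod card_pstr; congr (_ * _).
rewrite -cardE_sum; apply: eq_card => S.
by rewrite !inE.
Qed.

Theorem lemma3p3 (s k : nat) (hs : 1 <= s) (hk : k <= s) :
  O s k = 'C(s.*2 - k - 1, k) * (catalan (s - k)) ^ 2
  /\ O s k = \sum_(k <= m < s.+1) 'C(m, k) * E s m.
Proof.
split; first exact: part1.
exact: part2.
Qed.
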